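(* Let $k>0$ be an integer, $q\in[0,1]$, and let $m<M_{k,q}$. Let $h=h(n)$ satisfy $h(n)>2\,\mathbb{E}[X_{n,M_{k,q}}(k)]$. Then $$\Pr\left[X_{n,m}(k)<h^{-1}\cdot\mathbb{E}[X_{n,m}(k)]\right]\leq 2q.$$
   Context: $G^*(n,m)$ is the random graph on $n$ vertices obtained by inserting $m$ edges, each choosing its two endpoints uniformly at random with replacement, then deleting self-loops and replacing multiple edges by single edges. $X_{n,m}(k)=|\mathcal{S}_k(G^*(n,m))|$ is the number of independent sets of size exactly $k$ in $G^*(n,m)$, and $M_{k,q}=\max\{m\in\mathbb{N}:\Pr[X_{n,m}(k)>0]\geq1-q\}$. *)

(* Defs.v *)
From HB Require Import structures.
From mathcomp Require Import all_boot all_order all_algebra.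
Set Implicit Arguments. Unset Strict Implicit. Unset Printing Implicit Defensive.
Import Order.TTheory GRing.Theory Num.Theory.
Local Open Scope ring_scope.

(* Sample space of G*(n,m): each of the m edges picks an ordered pair of
   endpoints uniformly at random (with replacement); the uniform measure on
   {ffun 'I_m -> 'I_n * 'I_n} is exactly this process. *)
Notation edge_choice n m := {ffun 'I_m -> 'I_n * 'I_n}.

(* S is independent in G*(n,m) built from w: no (non-loop) edge has both
   endpoints in S.  Self-loops are deleted, multi-edges merged (which does
   not affect independence). *)
Definition indep_in (n m : nat) (w : edge_choice n m) (S : {set 'I_n}) : bool :=
  [forall i : 'I_m, ~~ [&& (w i).1 != (w i).2, (w i).1 \in S & (w i).2 \in S]].

Definition Xnmk (n m k : nat) (w : edge_choice n m) : nat :=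
  #|[set S : {set 'I_n} | (#|S| == k) && indep_in w S]|.

Definition Pr (R : realFieldType) (n m : nat) (A : pred (edge_choice n m)) : R :=
  (#|[set w : edge_choice n m | A w]|)%:R / (#|{: edge_choice n m}|)%:R.

Arguments Pr R n m A : clear implicits.

Definition EX (R : realFieldType) (n m k : nat) : R :=
  (\sum_(w : edge_choice n m) (Xnmk k w)%:R) / (#|{: edge_choice n m}|)%:R.

Arguments EX R n m k : clear implicits.

Definition is_Mkq (R : realFieldType) (n k : nat) (q : R) (M : nat) : Prop :=
  1 - q <= Pr R n M (fun w => 0 < Xnmk k w)%N /\
  forall m' : nat, 1 - q <= Pr R n m' (fun w => 0 < Xnmk k w)%N -> (m' <= M)%N.

(* Main.v *)
Require Import Defs.
From HB Require Import structures.
From mathcomp Require Import all_boot all_order all_algebra.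
From mathcomp Require Import zify ring lra.
Import Order.TTheory GRing.Theory Num.Theory.
Local Open Scope ring_scope.
Set Implicit Arguments. Unset Strict Implicit.

Definition join n m d (p : edge_choice n m * edge_choice n d) : edge_choice n (m+d) :=
  [ffun i => match split i with inl a => p.1 a | inr b => p.2 b end].
Definition fl n m d (w : edge_choice n (m+d)) : edge_choice n m := [ffun i => w (lshift d i)].
Definition fr n m d (w : edge_choice n (m+d)) : edge_choice n d := [ffun j => w (rshift m j)].

Lemma fl_join n m d p : fl (@join n m d p) = p.1.
Proof. by apply/ffunP => i; rewrite !ffunE (unsplitK (inl _ i)). Qed.
Lemma fr_join n m d p : fr (@join n m d p) = p.2.
Proof. by apply/ffunP => i; rewrite !ffunE (unsplitK (inr _ i)). Qed.

Lemma joinK n m d (w : edge_choice n (m+d)) : join (fl w, fr w) = w.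
Proof.
apply/ffunP => i; rewrite !ffunE /=; case: splitP => j /= Hj; rewrite ffunE;
  congr (w _); apply: val_inj; by rewrite /= Hj.
Qed.

Lemma indep_join n m d (p : edge_choice n m * edge_choice n d) S :
  indep_in (join p) S = indep_in p.1 S && indep_in p.2 S.
Proof.
apply/forallP/andP => [H | [/forallP H1 /forallP H2] i].
- split; apply/forallP => i.
  + by have := H (lshift d i); rewrite ffunE (unsplitK (inl _ i)).
  + by have := H (rshift m i); rewrite ffunE (unsplitK (inr _ i)).
- rewrite ffunE; case: (split i) => [a|b]; [exact: H1 | exact: H2].
Qed.

Lemma sum_split n m d (F : edge_choice n (m+d) -> nat) :
  (\sum_w F w = \sum_(w1 : edge_choice n m) \sum_(w2 : edge_choice n d) F (join (w1, w2)))%N.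
Proof.
rewrite pair_bigA /= (reindex (@join n m d)) /=; last first.
  exists (fun w => (fl w, fr w)) => [p _|w _]; last exact: joinK.
  by rewrite fl_join fr_join; case: p.
by apply: eq_bigr => -[a b] _.
Qed.

Lemma card_setsum (T : finType) (P : pred T) : #|[set x | P x]| = (\sum_x (P x : nat))%N.
Proof. rewrite -sum1_card big_mkcond /=; apply: eq_bigr => x _; rewrite inE; by case: (P x). Qed.

Definition cgood n (S : {set 'I_n}) :=
  #|[set e : 'I_n * 'I_n | ~~ [&& e.1 != e.2, e.1 \in S & e.2 \in S]]|.

Lemma card_indep n d S : #|[set w : edge_choice n d | indep_in w S]| = (cgood S ^ d)%N.
Proof.
rewrite -[d in RHS]card_ord -card_ffun_on; apply: eq_card => w; rewrite inE.
by apply/forallP/ffun_onP => H i; have := H i; rewrite inE.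
Qed.

Lemma cgoodE n (S : {set 'I_n}) : cgood S = (n*n - (#|S|*#|S| - #|S|))%N.
Proof.
set B := [set e : 'I_n * 'I_n | [&& e.1 != e.2, e.1 \in S & e.2 \in S]].
have -> : cgood S = #|~: B|.
  by apply: eq_card => e; rewrite !inE.
have HC := cardsC B; rewrite card_prod card_ord in HC.
set D := [set e : 'I_n * 'I_n | e.1 == e.2].
have HID := cardsID D (setX S S); rewrite cardsX in HID.
have E1 : setX S S :&: D = [set (x, x) | x in S].
  apply/setP => -[a b]; rewrite !inE /=.
  case: eqVneq => [<-|ne].
    rewrite andbb andbT; apply/idP/imsetP => [Hb|[x Hx [-> _]] //]; by exists a.
  by rewrite andbF; apply/esym/imsetP => -[x _ [Ha Hb]]; rewrite Ha Hb eqxx in ne.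
have E2 : setX S S :\: D = B.
  by apply/setP => -[a b]; rewrite !inE /= andbA.
rewrite E1 E2 card_imset in HID; last by move=> x y [].
move: HID HC; rewrite -/B; set s := #|S|; set b := #|B|; set c := #|~: B|; set ss := (s*s)%N; set nn := (n*n)%N; lia.
Qed.
Lemma XE n m k (w : edge_choice n m) :
  Xnmk k w = (\sum_(S : {set 'I_n}) ((#|S| == k) && indep_in w S : nat))%N.
Proof. by rewrite /Xnmk card_setsum. Qed.

Lemma sum_w2 n m d k (w1 : edge_choice n m) :
  (\sum_(w2 : edge_choice n d) Xnmk k (join (w1, w2)) = Xnmk k w1 * expn (n*n - (k*k-k)) d)%N.
Proof.
under eq_bigr do rewrite XE.
rewrite exchange_big /= XE big_distrl /=.
apply: eq_bigr => S _.
under eq_bigr do rewrite indep_join /=.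
case: eqP => [<-|_]; last by rewrite big1.
case: (indep_in w1 S) => /=; last by rewrite big1.
by rewrite mul1n -cgoodE -card_indep card_setsum.
Qed.

Lemma Pr_le1 (R : realFieldType) n m A : Pr R n m A <= 1.
Proof.
rewrite /Pr; have [->|H] := posnP #|{: edge_choice n m}|; first by rewrite invr0 mulr0.
by rewrite ler_pdivrMr ?ltr0n // mul1r ler_nat max_card.
Qed.

Theorem lemma4p3 (R : realFieldType) (n k : nat) (q h : R) (M m : nat) :
  (0 < k)%N -> 0 <= q <= 1 -> is_Mkq n k q M -> (m < M)%N ->
  2 * EX R n M k < h ->
  Pr R n m (fun w => (Xnmk k w)%:R < h^-1 * EX R n m k) <= 2 * q.
Proof.
move=> k0 /andP[q0 q1] [HM _] mM hEX.
set d := (M - m)%N.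
have eM : M = (m + d)%N by rewrite /d; lia.
clearbody d; subst M.
have cardE j : #|{: edge_choice n j}| = expn (n * n) j.
  by rewrite card_ffun card_prod !card_ord.
have [n0|npos] := posnP n.
  have : Pr R n (m + d) (fun w => (0 < Xnmk k w)%N) = 0.
    by rewrite /Pr cardE n0 exp0n ?invr0 ?mulr0 //; lia.
  move=> E; rewrite E in HM.
  have := @Pr_le1 R n m (fun w : edge_choice n m => (Xnmk k w)%:R < h^-1 * EX R n m k); lra.
set N := (n * n)%N.
have Npos : (0 < N)%N by rewrite /N muln_gt0 npos.
set c := expn (N - (k*k-k)) d.
set SX1 := (\sum_(w1 : edge_choice n m) Xnmk k w1)%N.
have Nmpos : (0 : R) < (expn N m)%:R by rewrite ltr0n expn_gt0 Npos.
have Ndpos : (0 : R) < (expn N d)%:R by rewrite ltr0n expn_gt0 Npos.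
have EXm : EX R n m k = SX1%:R / (expn N m)%:R.
  by rewrite /EX cardE -natr_sum.
have SM : (\sum_(w : edge_choice n (m+d)) Xnmk k w = SX1 * c)%N.
  rewrite sum_split /SX1 big_distrl; apply: eq_bigr => w1 _; by rewrite sum_w2.
have EXM : EX R n (m + d) k = (SX1 * c)%:R / ((expn N m)%:R * (expn N d)%:R).
  by rewrite /EX cardE -natr_sum SM expnD !natrM.
have EXM0 : 0 <= EX R n (m + d) k.
  by rewrite EXM; apply: divr_ge0; [exact: ler0n | rewrite mulr_ge0 ?ler0n].
have hpos : 0 < h by lra.
set A := [set w1 : edge_choice n m | (Xnmk k w1)%:R < h^-1 * EX R n m k].
have -> : Pr R n m (fun w => (Xnmk k w)%:R < h^-1 * EX R n m k) = #|A|%:R / (expn N m)%:R.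
  by rewrite /Pr cardE.
set Zs := fun w1 : edge_choice n m =>
  [set w2 : edge_choice n d | ~~ (0 < Xnmk k (join (w1, w2)))%N].
set Ps := fun w1 : edge_choice n m =>
  [set w2 : edge_choice n d | (0 < Xnmk k (join (w1, w2)))%N].
have ZP w1 : (#|Zs w1| + #|Ps w1| = expn N d)%N.
  rewrite -cardE -(cardsC (Ps w1)) addnC; congr (_ + _)%N.
  by apply: eq_card => w2; rewrite !inE.
have Pb w1 : (#|Ps w1| <= Xnmk k w1 * c)%N.
  rewrite /Ps card_setsum -sum_w2; apply: leq_sum => w2 _.
  by case: (Xnmk k _).
set Z := [set w : edge_choice n (m + d) | ~~ (0 < Xnmk k w)%N].
set P := [set w : edge_choice n (m + d) | (0 < Xnmk k w)%N].
have ZPt : (#|Z| + #|P| = expn N m * expn N d)%N.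
  rewrite -expnD -cardE -(cardsC P) addnC; congr (_ + _)%N.
  by apply: eq_card => w; rewrite !inE.
have Zsum : #|Z| = (\sum_(w1 : edge_choice n m) #|Zs w1|)%N.
  rewrite card_setsum sum_split; apply: eq_bigr => w1 _.
  by rewrite /Zs card_setsum.
set Nm := (expn N m)%:R : R.
set Nd := (expn N d)%:R : R.
set e := SX1%:R / Nm.
have e0 : 0 <= e by rewrite /e divr_ge0 ?ler0n // ltW.
have EXM' : EX R n (m + d) k = e * c%:R / Nd.
  by rewrite EXM /e natrM invfM; field; apply/andP; split; apply: lt0r_neq0.
have H1 : 2 * (e * c%:R) < h * Nd.
  by rewrite -ltr_pdivrMr // -mulrA; rewrite EXM' in hEX.
have H2 : 2 * (h^-1 * e * c%:R) < Nd.
  rewrite (_ : 2 * (h^-1 * e * c%:R) = (2 * (e * c%:R)) / h); last first.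
    by field; exact: lt0r_neq0.
  by rewrite ltr_pdivrMr //; nra.
have Zb w1 : w1 \in A -> Nd <= 2 * (#|Zs w1|)%:R.
  rewrite inE EXm -/e => Ha.
  have ZP' := ZP w1; have Pb' := Pb w1.
  move/(congr1 (fun x : nat => x%:R : R)): ZP'; rewrite natrD -/Nd => ZP'.
  move: Pb'; rewrite -(ler_nat R) natrM => Pb'.
  have c0 : (0 : R) <= c%:R by exact: ler0n.
  nra.
have ZA : #|A|%:R * Nd <= 2 * (#|Z|)%:R.
  rewrite Zsum natr_sum mulr_sumr.
  apply: le_trans (_ : \sum_(w1 : edge_choice n m) (if w1 \in A then Nd else 0) <= _).
    by rewrite -big_mkcond sumr_const mulr_natl.
  by apply: ler_sum => w1 _; case: ifP => [/Zb//|_]; rewrite mulr_ge0 ?ler0n.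
have HM' : (1 - q) * (Nm * Nd) <= (#|P|)%:R.
  move: HM; rewrite /Pr cardE expnD natrM -/Nm -/Nd.
  rewrite ler_pdivlMr ?mulr_gt0 //.
move/(congr1 (fun x : nat => x%:R : R)): ZPt; rewrite natrD natrM -/Nm -/Nd => ZPt.
rewrite ler_pdivrMr //.
have NmNd : 0 < Nm * Nd by rewrite mulr_gt0.
nra.
Qed.
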